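(* For $a\in(0,1)$ define $$F(a):=-\int_0^{\pi}\operatorname{Im}\bigl\{w_a(t)\bigr\}\,\frac{dt}{\sqrt{a+1/a-2\cos t}},$$ where $w_a:[0,\pi]\to\mathbb{C}$ is the continuous fourth root of $e^{3it}\,\frac{1-ae^{it}}{e^{it}-a}$ (i.e. $w_a(t)^4=e^{3it}\frac{1-ae^{it}}{e^{it}-a}$) with $w_a(0)=1$. Let $\alpha\in(0,1)$ be the unique zero of $F$ in $(0,1)$. Then $\alpha>\tfrac12$.
   Context: It is established (independently of this statement) that $F$ vanishes at exactly one point of $(0,1)$, which is denoted $\alpha$; $F(a)$ is negative for $a$ close to $0$ and $F(a)\to+\infty$ as $a\to1$. *)

(* Defs.v *)
From Stdlib Require Import Reals.
From Coquelicot Require Import Coquelicot.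
Open Scope R_scope.

Definition cis (t : R) : C := (cos t, sin t).

Definition g_fun (a t : R) : C :=
  Cmult (Cpow (cis t) 3)
        (Cdiv (Cminus (RtoC 1) (Cmult (RtoC a) (cis t)))
              (Cminus (cis t) (RtoC a))).

(* w is "the" continuous fourth root of g_a on [0,pi] with w(0) = 1
   (such a w is unique on [0,pi]). Continuity is continuity of the
   restriction to [0,pi]. *)
Definition is_w (a : R) (w : R -> C) : Prop :=
  (forall t, 0 <= t <= PI ->
     filterlim w (within (fun x => 0 <= x <= PI) (locally t)) (locally (w t)))
  /\ (forall t, 0 <= t <= PI -> Cpow (w t) 4 = g_fun a t)
  /\ w 0 = RtoC 1.

Definition F_with (a : R) (w : R -> C) : R :=
  - RInt (fun t => Im (w t) / sqrt (a + / a - 2 * cos t)) 0 PI.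

(* Main.v *)
Require Import Defs.
From Stdlib Require Import Reals Lra Nsatz.
From Coquelicot Require Import Coquelicot.
Open Scope R_scope.

Definition r2 (a t : R) := 1 - 2 * a * cos t + a ^ 2.
Definition U1 (a t : R) := (cos t - 2 * a * cos t ^ 2 + a) / sqrt (r2 a t).
Definition U2 (a t : R) := sin t * (1 - 2 * a * cos t) / sqrt (r2 a t).

Lemma r2_pos a t : 0 < a < 1 -> 0 < r2 a t.
Proof. intros. unfold r2. pose proof (COS_bound t). nra. Qed.

Lemma g_eq a t : 0 < a < 1 ->
  g_fun a t = (U1 a t ^ 2 - U2 a t ^ 2, 2 * U1 a t * U2 a t).
Proof.
  intros Ha. pose proof (r2_pos a t Ha) as Hr.
  pose proof (sqrt_sqrt _ (Rlt_le _ _ Hr)) as Hs.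
  pose proof (sqrt_lt_R0 _ Hr) as Hs0.
  pose proof (sin2_cos2 t) as Hsc.
  assert (E: forall x : R, (x / sqrt (r2 a t)) ^ 2 = x^2 / r2 a t).
  { intros. set (q := sqrt (r2 a t)) in *. rewrite <- Hs. field. lra. }
  assert (E2: forall x y, 2 * (x / sqrt (r2 a t)) * (y / sqrt (r2 a t)) = 2 * x * y / r2 a t).
  { intros. set (q := sqrt (r2 a t)) in *. rewrite <- Hs. field. lra. }
  unfold U1, U2. rewrite !E, E2.
  unfold g_fun, cis, Cdiv, Cminus, Cinv, Cmult, Copp, Cplus, RtoC; simpl.
  assert (HD : (cos t + - a) * ((cos t + - a) * 1) + (sin t + - 0) * ((sin t + - 0) * 1) = r2 a t).
  { unfold r2, Rsqr in *. nra. }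
  rewrite HD.
  unfold r2 in *.
  set (c := cos t) in *. set (s := sin t) in *. unfold Rsqr in Hsc.
  assert (Hs2 : s^2 = 1 - c^2) by nra.
  f_equal.
  - field_simplify_eq; [| lra].
    replace (s^4) with ((s^2)^2) by ring. rewrite Hs2. ring.
  - field_simplify_eq; [| lra].
    replace (s^5) with (s*(s^2)^2) by ring. replace (s^3) with (s*s^2) by ring.
    rewrite Hs2. ring.
Qed.

Lemma U_norm a t : 0 < a < 1 -> U1 a t ^ 2 + U2 a t ^ 2 = 1.
Proof.
  intros Ha. pose proof (r2_pos a t Ha) as Hr.
  pose proof (sqrt_sqrt _ (Rlt_le _ _ Hr)) as Hs.
  pose proof (sqrt_lt_R0 _ Hr) as Hs0.
  pose proof (sin2_cos2 t) as Hsc.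
  unfold U1, U2. set (q := sqrt (r2 a t)) in *. unfold r2 in *.
  set (c := cos t) in *. set (s := sin t) in *. unfold Rsqr in Hsc.
  field_simplify_eq; [| lra]. replace (q^2) with (q*q) by ring. rewrite Hs. assert (Hs2 : s^2 = 1 - c^2) by nra. rewrite Hs2. ring.
Qed.

Lemma pow4_eq (z : C) :
  Cpow z 4 = ((fst z ^ 2 - snd z ^ 2) ^ 2 - (2 * fst z * snd z) ^ 2,
              2 * (fst z ^ 2 - snd z ^ 2) * (2 * fst z * snd z)).
Proof. destruct z as [x y]. unfold Cpow, Cmult; simpl. f_equal; ring. Qed.

Lemma sq_roots p1 p2 u1 u2 :
  p1 ^ 2 - p2 ^ 2 = u1 ^ 2 - u2 ^ 2 -> 2 * p1 * p2 = 2 * u1 * u2 ->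
  (p1 = u1 /\ p2 = u2) \/ (p1 = - u1 /\ p2 = - u2).
Proof.
  intros H1 H2.
  assert (K : ((p1 - u1)^2 + (p2 - u2)^2) * ((p1 + u1)^2 + (p2 + u2)^2) = 0).
  { replace 0 with ((p1^2 - p2^2 - (u1^2 - u2^2))^2 + (2*p1*p2 - 2*u1*u2)^2)
      by (rewrite H1, H2; ring). ring. }
  apply Rmult_integral in K. destruct K as [K|K].
  - assert (K' : Rsqr (p1 - u1) + Rsqr (p2 - u2) = 0) by (unfold Rsqr; nra).
    apply Rplus_sqr_eq_0 in K'. left; split; lra.
  - assert (K' : Rsqr (p1 + u1) + Rsqr (p2 + u2) = 0) by (unfold Rsqr; nra).
    apply Rplus_sqr_eq_0 in K'. right; split; lra.
Qed.

Definition cl (x : R) := Rmax 0 (Rmin PI x).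

Lemma cl_in x : 0 <= cl x <= PI.
Proof. pose proof PI_RGT_0. unfold cl, Rmax, Rmin; repeat destruct Rle_dec; lra. Qed.

Lemma cl_id x : 0 <= x <= PI -> cl x = x.
Proof. intros. unfold cl, Rmax, Rmin; repeat destruct Rle_dec; lra. Qed.

Lemma cl_lip x y : Rabs (cl y - cl x) <= Rabs (y - x).
Proof.
  pose proof PI_RGT_0. unfold cl, Rmax, Rmin; repeat destruct Rle_dec;
  unfold Rabs; repeat destruct Rcase_abs; lra.
Qed.

Definition Dpi := fun x => 0 <= x <= PI.

Lemma cl_cont x : filterlim cl (locally x) (within Dpi (locally (cl x))).
Proof.
  intros P [eps HP]. exists eps. intros y Hy. apply HP.
  - unfold ball in *; simpl in *. unfold AbsRing_ball, abs, minus, plus, opp in *; simpl in *.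
    eapply Rle_lt_trans; [apply cl_lip|]. exact Hy.
  - apply cl_in.
Qed.

Lemma ext_cont {V : UniformSpace} (w : R -> V) :
  (forall t, 0 <= t <= PI ->
     filterlim w (within (fun x => 0 <= x <= PI) (locally t)) (locally (w t))) ->
  forall x, continuous (fun y => w (cl y)) x.
Proof.
  intros Hw x. unfold continuous.
  eapply filterlim_comp; [apply cl_cont|]. apply Hw, cl_in.
Qed.

Lemma pos_all (f : R -> R) :
  (forall x, continuous f x) -> 0 < f 0 ->
  (forall t, 0 <= t <= PI -> f t <> 0) ->
  forall t, 0 <= t <= PI -> 0 < f t.
Proof.
  intros Hc H0 Hn t Ht.
  destruct (Rlt_le_dec 0 (f t)) as [h|h]; auto.
  assert (h' : f t < 0) by (pose proof (Hn t Ht); lra).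
  destruct (IVT_gen_consistent f 0 t 0 Hc) as [x [Hx Hfx]].
  { unfold Rmin, Rmax; repeat destruct Rle_dec; lra. }
  exfalso. apply (Hn x); auto. unfold Rmin, Rmax in Hx; repeat destruct Rle_dec; lra.
Qed.

Lemma cU1 a x : 0 < a < 1 -> continuity_pt (U1 a) x.
Proof.
  intros Ha. apply continuity_pt_filterlim. apply (ex_derive_continuous (K:=R_AbsRing) (V:=R_NormedModule)).
  unfold U1, r2. pose proof (r2_pos a x Ha). unfold r2 in H.
  auto_derive. split; [lra|]. split; [|auto]. apply Rgt_not_eq, sqrt_lt_R0; lra.
Qed.
Lemma cU2 a x : 0 < a < 1 -> continuity_pt (U2 a) x.
Proof.
  intros Ha. apply continuity_pt_filterlim. apply (ex_derive_continuous (K:=R_AbsRing) (V:=R_NormedModule)).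
  unfold U2, r2. pose proof (r2_pos a x Ha). unfold r2 in H.
  auto_derive. split; [lra|]. split; [|auto]. apply Rgt_not_eq, sqrt_lt_R0; lra.
Qed.

Lemma cX (w : R -> C) :
  (forall t, 0 <= t <= PI ->
     filterlim w (within (fun x => 0 <= x <= PI) (locally t)) (locally (w t))) ->
  forall x, continuity_pt (fun y => fst (w (cl y))) x /\ continuity_pt (fun y => snd (w (cl y))) x.
Proof.
  intros Hw x. pose proof (ext_cont w Hw x) as H.
  split; apply continuity_pt_filterlim.
  - apply (continuous_comp (fun y => w (cl y)) fst); auto.
    pose proof (continuous_fst (fst (w (cl x))) (snd (w (cl x)))) as K.
    rewrite <- surjective_pairing in K. exact K.
  - apply (continuous_comp (fun y => w (cl y)) snd); auto.
    pose proof (continuous_snd (fst (w (cl x))) (snd (w (cl x)))) as K.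
    rewrite <- surjective_pairing in K. exact K.
Qed.

Theorem lemma5p1 :
  forall (alpha : R) (w : R -> C),
    0 < alpha < 1 ->
    is_w alpha w ->
    F_with alpha w = 0 ->
    alpha > 1 / 2.
Proof.
  intros a w Ha [Hwc [Hw4 Hw0]] HF.
  destruct (Rlt_le_dec (1/2) a) as [h|h]; [exact h|exfalso].
  pose proof PI_RGT_0 as Hpi.
  assert (Hroots : forall t, 0 <= t <= PI ->
    let X := fst (w t) in let Y := snd (w t) in
    (X^2 - Y^2 = U1 a t /\ 2*X*Y = U2 a t) \/ (X^2 - Y^2 = - U1 a t /\ 2*X*Y = - U2 a t)).
  { intros t Ht X Y. pose proof (Hw4 t Ht) as E.
    rewrite pow4_eq, g_eq in E by exact Ha. injection E as E1 E2.
    apply sq_roots; assumption. }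
  pose (q := fun x => (fst (w (cl x))^2 - snd (w (cl x))^2) * U1 a x
                      + 2 * fst (w (cl x)) * snd (w (cl x)) * U2 a x).
  assert (Hqc : forall x, continuous q x).
  { intros x. apply continuity_pt_filterlim. unfold q.
    destruct (cX w Hwc x) as [C1 C2].
    pose proof (cU1 a x Ha). pose proof (cU2 a x Ha).
    apply continuity_pt_plus; apply continuity_pt_mult; auto;
      repeat first [apply continuity_pt_minus | apply continuity_pt_mult
                   | apply continuity_pt_const; intros ? ?; reflexivity
                   | apply continuity_pt_pow | assumption]. }
  assert (Hq : forall t, 0 <= t <= PI -> q t = 1 \/ q t = -1).
  { intros t Ht. unfold q. rewrite cl_id by exact Ht.
    pose proof (U_norm a t Ha).
    destruct (Hroots t Ht) as [[E1 E2]|[E1 E2]]; rewrite E1, E2; [left|right]; nra. }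
  assert (Hq0 : 0 < q 0).
  { unfold q. rewrite cl_id by lra. rewrite Hw0. simpl.
    match goal with |- 0 < ?e => replace e with (U1 a 0) by ring end.
    unfold U1, r2. rewrite cos_0.
    assert (0 < sqrt (1 - 2 * a * 1 + a ^ 2)) by (apply sqrt_lt_R0; nra).
    apply Rdiv_lt_0_compat; lra. }
  assert (Hqpos := pos_all q Hqc Hq0 (fun t Ht => ltac:(destruct (Hq t Ht); lra))).
  assert (HP2 : forall t, 0 <= t <= PI -> 2 * fst (w t) * snd (w t) = U2 a t).
  { intros t Ht. pose proof (Hqpos t Ht). pose proof (Hq t Ht).
    destruct (Hroots t Ht) as [[E1 E2]|[E1 E2]]; auto.
    exfalso. unfold q in *. rewrite cl_id in * by exact Ht.
    pose proof (U_norm a t Ha). rewrite E1, E2 in *. nra. }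
  assert (HU2 : forall t, 0 <= t <= PI -> 0 <= U2 a t).
  { intros t Ht. unfold U2. pose proof (r2_pos a t Ha).
    pose proof (sqrt_lt_R0 _ H). pose proof (sin_ge_0 t ltac:(lra) ltac:(lra)).
    pose proof (COS_bound t). apply Rdiv_le_0_compat; [|lra].
    apply Rmult_le_pos; nra. }
  assert (HU2s : forall t, 0 < t < PI -> 0 < U2 a t).
  { intros t Ht. unfold U2. pose proof (r2_pos a t Ha).
    pose proof (sqrt_lt_R0 _ H). pose proof (sin_gt_0 t ltac:(lra) ltac:(lra)).
    pose proof (sin2_cos2 t). unfold Rsqr in *.
    pose proof (COS_bound t). apply Rdiv_lt_0_compat; [|lra].
    apply Rmult_lt_0_compat; nra. }
  pose (hh := fun x => fst (w (cl x)) + snd (w (cl x))).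
  assert (Hhc : forall x, continuous hh x).
  { intros x. apply continuity_pt_filterlim. unfold hh.
    destruct (cX w Hwc x) as [C1 C2]. apply continuity_pt_plus; auto. }
  assert (Hh0 : 0 < hh 0).
  { unfold hh. rewrite cl_id by lra. rewrite Hw0. simpl. lra. }
  assert (Hhn : forall t, 0 <= t <= PI -> hh t <> 0).
  { intros t Ht E. unfold hh in E. rewrite cl_id in E by exact Ht.
    pose proof (HP2 t Ht). pose proof (HU2 t Ht).
    assert (Y0 : snd (w t) = - fst (w t)) by lra.
    rewrite Y0 in *.
    assert (X0 : fst (w t) = 0) by nra.
    pose proof (U_norm a t Ha).
    destruct (Hroots t Ht) as [[E1 E2]|[E1 E2]]; cbv zeta in E1, E2;
      rewrite Y0, X0 in E1, E2; nra. }
  assert (Hhpos := pos_all hh Hhc Hh0 Hhn).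
  assert (HY : forall t, 0 < t < PI -> 0 < snd (w t)).
  { intros t Ht. assert (Ht' : 0 <= t <= PI) by lra.
    pose proof (Hhpos t Ht'). unfold hh in H. rewrite cl_id in H by exact Ht'.
    pose proof (HP2 t Ht'). pose proof (HU2s t Ht). nra. }
  assert (Hden : forall x, 0 < a + / a - 2 * cos x).
  { intros x. pose proof (COS_bound x).
    assert (a + / a - 2 = (1 - a)^2 / a) by (field; lra).
    assert (0 < (1 - a)^2 / a) by (apply Rdiv_lt_0_compat; nra). lra. }
  pose (ft := fun x => snd (w (cl x)) / sqrt (a + / a - 2 * cos x)).
  assert (HI : RInt (fun t => Im (w t) / sqrt (a + / a - 2 * cos t)) 0 PI = RInt ft 0 PI).
  { apply RInt_ext. intros x Hx. rewrite Rmin_left, Rmax_right in Hx by lra.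
    unfold ft. rewrite cl_id by lra. reflexivity. }
  assert (Hpos : 0 < RInt ft 0 PI).
  { apply RInt_gt_0; [lra| |].
    - intros x Hx. unfold ft. rewrite cl_id by lra.
      apply Rdiv_lt_0_compat; [apply HY; lra|]. apply sqrt_lt_R0, Hden.
    - intros x _. apply continuity_pt_filterlim. unfold ft.
      destruct (cX w Hwc x) as [C1 C2].
      apply continuity_pt_div; auto.
      + apply continuity_pt_filterlim.
        apply (ex_derive_continuous (K:=R_AbsRing) (V:=R_NormedModule) (fun x => sqrt (a + / a - 2 * cos x))).
        pose proof (Hden x). auto_derive. lra.
      + apply Rgt_not_eq, sqrt_lt_R0, Hden. }
  unfold F_with in HF. rewrite HI in HF. lra.
Qed.
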